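(* Let $\psi\in\mathcal K^\star$ have radius of convergence $R_\psi>0$, apex $\tau$ and Khinchin family $(Y_t)$; for $t\in(0,R_\psi)$ let $q(t)$ be the extinction probability of the Galton–Watson process with offspring distribution $Y_t$. Then $q$ is differentiable on $(0,R_\psi)\setminus\{\tau\}$, and its derivative has a jump discontinuity at $t=\tau$: $$\lim_{t\downarrow\tau}\frac{q(t)-1}{t-\tau}=-\frac{2}{\tau},\qquad\lim_{t\uparrow\tau}\frac{q(t)-1}{t-\tau}=0.$$ Moreover, for all $t\in(0,R_\psi)\setminus\{\tau\}$, $$q'(t)=\frac{q(t)}{t}\left(\frac{1-m_\psi(t)}{1-m_\psi(tq(t))}-1\right).$$
   Context: $\mathcal K$ is the class of non-constant power series $f(z)=\sum_{n\ge0}a_nz^n$ with positive radius of convergence $R$, non-negative coefficients and $a_0>0$; its Khinchin family $(X_t)$ is given by $\mathbf P(X_t=n)=a_nt^n/f(t)$ for $n\ge0$, $t\in(0,R)$, with mean $m_f(t)=tf'(t)/f(t)$ (increasing in $t$). $\mathcal K^\star$ is the subclass of $f\in\mathcal K$ with $\lim_{t\uparrow R}m_f(t)>1$; the apex is the unique $\tau\in(0,R)$ with $m_f(\tau)=1$. The extinction probability is the probability that the Galton–Watson tree is finite. *)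

(* Defs.v *)
From Stdlib Require Import Reals.
From Coquelicot Require Export Coquelicot.
Open Scope R_scope.

Definition psf (a : nat -> R) (x : R) : R := PSeries a x.

Definition radius (a : nat -> R) : Rbar := CV_radius a.

Definition in_K (a : nat -> R) : Prop :=
  (forall n, 0 <= a n) /\ 0 < a 0%nat /\ (exists n, (1 <= n)%nat /\ a n <> 0)
  /\ Rbar_lt 0 (radius a).

Definition mean_f (a : nat -> R) (t : R) : R :=
  t * Derive (psf a) t / psf a t.

Definition Rbar_at_left (r : Rbar) : (R -> Prop) -> Prop :=
  within (fun x => Rbar_lt x r) (Rbar_locally' r).

Definition in_Kstar (a : nat -> R) : Prop :=
  in_K a /\ exists l : Rbar,
    filterlim (mean_f a) (Rbar_at_left (radius a)) (Rbar_locally l) /\ Rbar_lt 1 l.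

Definition is_apex (a : nat -> R) (tau : R) : Prop :=
  0 < tau /\ Rbar_lt tau (radius a) /\ mean_f a tau = 1.

(* Probability generating function of Y_t (P(Y_t = n) = a_n t^n / f(t)):
   E[s^{Y_t}] = f(t s) / f(t). *)
Definition pgf_Y (a : nat -> R) (t : R) (s : R) : R := psf a (t * s) / psf a t.

(* Extinction probability of the Galton-Watson process with offspring
   distribution Y_t: P(extinction) = lim_n P(Z_n = 0), and
   P(Z_n = 0) = G^{(n)}(0) (n-fold iterate of the offspring pgf G at 0). *)
Definition extinction_prob (a : nat -> R) (t : R) : R :=
  real (Lim_seq (fun n => Nat.iter n (pgf_Y a t) 0)).

(* Main.v *)
Require Import Defs.
From Stdlib Require Import Reals Lra Psatz Classical.
From Coquelicot Require Import Coquelicot.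
Open Scope R_scope.

Lemma pser_lower (b : nat -> R) (x : R) :
  (forall n, 0 <= b n) -> 0 <= x -> Rbar_lt x (CV_radius b) ->
  forall n, b n * x ^ n <= PSeries b x.
Proof.
  intros Hb Hx Hr n.
  assert (Hr' : Rbar_lt (Rabs x) (CV_radius b)) by (rewrite Rabs_pos_eq; auto).
  destruct (CV_radius_inside b x Hr') as [l Hl].
  assert (Hs : is_series (fun k => b k * x ^ k) l).
  { eapply is_series_ext; [|exact Hl]. intros k; simpl.
    rewrite pow_n_pow. unfold scal; simpl. unfold mult; simpl. ring. }
  assert (HP : PSeries b x = l) by (apply is_pseries_unique; exact Hl).
  rewrite HP.
  assert (Hnn : forall k, 0 <= b k * x ^ k).
  { intros k. apply Rmult_le_pos; auto. apply pow_le; auto. }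
  apply Rle_trans with (sum_n (fun k => b k * x ^ k) n).
  - destruct n. rewrite sum_O. lra.
    rewrite sum_Sn. unfold plus; simpl.
    assert (0 <= sum_n (fun k => b k * x ^ k) n).
    { clear -Hnn. induction n. rewrite sum_O. apply Hnn. rewrite sum_Sn. unfold plus; simpl.
      apply Rplus_le_le_0_compat; [exact IHn | apply Hnn]. }
    lra.
  - apply (is_lim_seq_incr_compare (sum_n (fun k => b k * x ^ k)) l Hs).
    intros m. rewrite sum_Sn. unfold plus; simpl. pose proof (Hnn (S m)). simpl in H. lra.
Qed.


Lemma deriv_cont (F : R -> R) (x l : R) : is_derive F x l -> continuity_pt F x.
Proof.
  intros H. apply (proj2 (continuity_pt_filterlim F x)). apply (ex_derive_continuous (K:=R_AbsRing) (V:=R_NormedModule) F x). exists l; exact H.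
Qed.

Lemma mvt (F dF : R -> R) (x y : R) : x <= y -> (forall z, x <= z <= y -> is_derive F z (dF z)) ->
  exists c, x <= c <= y /\ F y - F x = dF c * (y - x).
Proof.
  intros Hxy HD. destruct (Req_dec x y) as [E|NE].
  - subst. exists y. split. lra. ring.
  - destruct (MVT_gen F x y dF) as [c [Hc Hc2]].
    + intros z. rewrite Rmin_left, Rmax_right by lra. intros Hz. apply HD. lra.
    + intros z. rewrite Rmin_left, Rmax_right by lra. intros Hz. apply (deriv_cont _ _ (dF z)). apply HD. lra.
    + rewrite Rmin_left, Rmax_right in Hc by lra. exists c. split; auto.
Qed.

Lemma decr_strict (F dF : R -> R) (x y : R) : x < y ->
  (forall z, x <= z <= y -> is_derive F z (dF z)) ->
  (forall z, x <= z <= y -> dF z <= 0) ->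
  (forall z, x < z < y -> dF z < 0) -> F y < F x.
Proof.
  intros Hxy HD Hle Hlt.
  set (m1 := (2*x+y)/3). set (m2 := (x+2*y)/3).
  destruct (mvt F dF x m1) as [c1 [Hc1 E1]]. unfold m1; lra.
  intros z Hz; apply HD; unfold m1 in *; lra.
  destruct (mvt F dF m1 m2) as [c2 [Hc2 E2]]. unfold m1, m2; lra.
  intros z Hz; apply HD; unfold m1, m2 in *; lra.
  destruct (mvt F dF m2 y) as [c3 [Hc3 E3]]. unfold m2; lra.
  intros z Hz; apply HD; unfold m2 in *; lra.
  assert (dF c1 <= 0) by (apply Hle; unfold m1 in *; lra).
  assert (dF c2 < 0) by (apply Hlt; unfold m1, m2 in *; lra).
  assert (dF c3 <= 0) by (apply Hle; unfold m2 in *; lra).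
  assert (m1 - x > 0) by (unfold m1; lra).
  assert (m2 - m1 > 0) by (unfold m1, m2; lra).
  assert (y - m2 > 0) by (unfold m2; lra).
  nra.
Qed.

Lemma incr_strict (F dF : R -> R) (x y : R) : x < y ->
  (forall z, x <= z <= y -> is_derive F z (dF z)) ->
  (forall z, x <= z <= y -> 0 <= dF z) ->
  (forall z, x < z < y -> 0 < dF z) -> F x < F y.
Proof.
  intros Hxy HD Hle Hlt.
  assert (- F y < - F x); [|lra].
  apply (decr_strict (fun t => - F t) (fun t => - dF t)); auto.
  - intros z Hz. apply (is_derive_opp F z (dF z)). auto.
  - intros z Hz. specialize (Hle z Hz). lra.
  - intros z Hz. specialize (Hlt z Hz). lra.
Qed.

Lemma sign_near (Q : R -> R) (x0 d : R) : is_derive Q x0 d -> Q x0 = 0 -> 0 < d ->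
  exists del, 0 < del /\ forall x, Rabs (x - x0) < del -> 0 <= Q x * (x - x0).
Proof.
  intros HD HQ Hd. apply is_derive_Reals in HD.
  destruct (HD d Hd) as [del Hdel]. exists del. split. apply cond_pos.
  intros x Hx. destruct (Req_dec x x0) as [E|NE]. subst. rewrite Rminus_diag. lra.
  specialize (Hdel (x - x0)). replace (x0 + (x - x0)) with x in Hdel by ring.
  rewrite HQ in Hdel. assert (x - x0 <> 0) by lra.
  specialize (Hdel H Hx).
  apply Rabs_def2 in Hdel. destruct Hdel as [_ Hdel].
  assert (0 < (Q x - 0) / (x - x0)) by lra.
  replace (Q x * (x - x0)) with ((Q x - 0) / (x - x0) * ((x - x0) * (x - x0))) by (field; auto).
  apply Rmult_le_pos. lra. nra.
Qed.

Lemma quad_min (P dP : R -> R) (x0 del0 d : R) : 0 < del0 ->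
  (forall x, Rabs (x - x0) < del0 -> is_derive P x (dP x)) ->
  dP x0 = 0 -> is_derive dP x0 d -> 0 < d ->
  exists del, 0 < del /\ forall x, Rabs (x - x0) < del -> P x0 <= P x.
Proof.
  intros Hd0 HD H0 HdD Hd.
  destruct (sign_near dP x0 d HdD H0 Hd) as [d1 [Hd1 Hs]].
  exists (Rmin del0 d1). split. apply Rmin_glb_lt; auto.
  intros x Hx. assert (Hx0 : Rabs (x - x0) < del0) by (eapply Rlt_le_trans; [exact Hx| apply Rmin_l]).
  assert (Hx1 : Rabs (x - x0) < d1) by (eapply Rlt_le_trans; [exact Hx| apply Rmin_r]).
  destruct (Rle_or_lt x0 x) as [Hle|Hlt].
  - destruct (mvt P dP x0 x Hle) as [c [Hc E]].
    { intros z Hz. apply HD. apply Rabs_def1; apply Rabs_def2 in Hx0; lra. }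
    assert (Hsc : 0 <= dP c * (c - x0)). { apply Hs. apply Rabs_def1; apply Rabs_def2 in Hx1; lra. }
    destruct (Req_dec c x0) as [Ec|Nc]. subst c. rewrite H0 in E. lra.
    assert (0 <= dP c). { destruct (Rle_or_lt 0 (dP c)); auto. nra. }
    nra.
  - destruct (mvt P dP x x0) as [c [Hc E]]. lra.
    { intros z Hz. apply HD. apply Rabs_def1; apply Rabs_def2 in Hx0; lra. }
    assert (Hsc : 0 <= dP c * (c - x0)). { apply Hs. apply Rabs_def1; apply Rabs_def2 in Hx1; lra. }
    destruct (Req_dec c x0) as [Ec|Nc]. subst c. rewrite H0 in E. lra.
    assert (dP c <= 0). { destruct (Rle_or_lt (dP c) 0); auto. nra. }
    nra.
Qed.


Lemma ball_R (x y : R) (e : posreal) : ball x e y <-> Rabs (y - x) < e.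
Proof. reflexivity. Qed.

Lemma deriv_to_lim (F : R -> R) (x l : R) : is_derive F x l ->
  is_lim (fun y => (F y - F x) / (y - x)) x l.
Proof.
  intros H. apply is_derive_Reals in H. apply is_lim_spec. intros eps.
  destruct (H eps (cond_pos eps)) as [del Hd].
  exists del. intros y0 Hy Hyx. set (y := (y0 : R)) in *. apply ball_R in Hy.
  assert (y - x <> 0) by lra.
  specialize (Hd (y - x) H0 Hy). replace (x + (y - x)) with y in Hd by ring. exact Hd.
Qed.

Lemma lim_to_deriv (F : R -> R) (x l : R) :
  is_lim (fun y => (F y - F x) / (y - x)) x l -> is_derive F x l.
Proof.
  intros H. apply is_derive_Reals. apply is_lim_spec in H. intros eps Heps.
  destruct (H (mkposreal eps Heps)) as [del Hd].
  exists del. intros h Hh Hhd. simpl in Hd.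
  specialize (Hd (x + h)). 
  assert (ball x del (x + h)) by (apply ball_R; replace (x + h - x) with h by ring; exact Hhd).
  specialize (Hd H0). replace (x + h - x) with h in Hd by ring. apply Hd. lra.
Qed.

Lemma implicit_deriv (phi sig : R -> R) (t0 A B : R) :
  is_derive phi t0 A -> is_derive phi (sig t0) B -> B <> 0 ->
  locally t0 (fun t => phi (sig t) = phi t /\ (t <> t0 -> phi t <> phi t0)) ->
  is_lim sig t0 (sig t0) ->
  is_derive sig t0 (A / B).
Proof.
  intros HA HB HB0 Hloc Hc.
  apply lim_to_deriv.
  pose proof (deriv_to_lim _ _ _ HA) as LA.
  pose proof (deriv_to_lim _ _ _ HB) as LB.
  assert (Hne : Rbar_locally' t0 (fun y => Finite (sig y) <> Finite (sig t0))).
  { destruct Hloc as [d Hd]. exists d. intros y Hy Hyt.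
    destruct (Hd y Hy) as [E1 E2]. destruct (Hd t0 (ball_center t0 d)) as [E3 _].
    intros Es. injection Es as Es. apply (E2 Hyt). rewrite <- E1, <- E3, Es. reflexivity. }
  pose proof (is_lim_comp _ _ t0 B (sig t0) LB Hc Hne) as LC.
  pose proof (is_lim_div _ _ t0 A B LA LC) as LD.
  assert (HH : B <> 0 -> Finite B <> Finite 0) by (intros h e; injection e; auto).
  specialize (LD (HH HB0)). simpl in LD.
  assert (Hex : ex_Rbar_div A B).
  { unfold ex_Rbar_div. simpl. destruct (Req_EM_T B 0); [contradiction|]. simpl. exact I. }
  specialize (LD Hex). simpl in LD. destruct (Req_EM_T B 0) as [e|_] in LD; [contradiction|]. simpl in LD.
  assert (Hv : Rbar_div A B = Finite (A / B)).
  { unfold Rbar_div. simpl. destruct (Req_EM_T B 0); [contradiction|]. reflexivity. }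
  idtac.
  eapply is_lim_ext_loc; [|exact LD].
  destruct Hloc as [d Hd]. exists d. intros y Hy Hyt.
  destruct (Hd y Hy) as [E1 E2]. destruct (Hd t0 (ball_center t0 d)) as [E3 _].
  specialize (E2 Hyt).
  assert (sig y <> sig t0). { intros Es. apply E2. rewrite <- E1, <- E3, Es. reflexivity. }
  rewrite E1, E3. field. repeat split; try lra.
Qed.


Definition f0 a := PSeries a.
Definition f1 a := PSeries (PS_derive a).
Definition f2 a := PSeries (PS_derive (PS_derive a)).
Definition gg a x := x * f1 a x - f0 a x.
Definition phi a x := f0 a x / x.
Definition dphi a x := gg a x / x^2.

Lemma rlt_mono (R0 : Rbar) x y : x <= y -> Rbar_lt y R0 -> Rbar_lt x R0.
Proof. destruct R0; simpl; intros; lra || auto. Qed.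

Lemma PSd_nonneg a : (forall n, 0 <= a n) -> forall n, 0 <= PS_derive a n.
Proof. intros H n. unfold PS_derive. apply Rmult_le_pos; auto. apply pos_INR. Qed.

Lemma rabs_ok a x : 0 <= x -> Rbar_lt x (radius a) -> Rbar_lt (Rabs x) (CV_radius a).
Proof. intros. rewrite Rabs_pos_eq; auto. Qed.

Lemma D0 a x : 0 <= x -> Rbar_lt x (radius a) -> is_derive (f0 a) x (f1 a x).
Proof. intros. apply is_derive_PSeries. apply rabs_ok; auto. Qed.

Lemma D1 a x : 0 <= x -> Rbar_lt x (radius a) -> is_derive (f1 a) x (f2 a x).
Proof. intros. apply is_derive_PSeries. rewrite CV_radius_derive. apply rabs_ok; auto. Qed.

Lemma f0_pos a x : (forall n, 0 <= a n) -> 0 < a 0%nat -> 0 <= x -> Rbar_lt x (radius a) ->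
  a 0%nat <= f0 a x.
Proof. intros. pose proof (pser_lower a x H H1 H2 0). simpl in H3. unfold f0. lra. Qed.

Lemma f1_nn a x : (forall n, 0 <= a n) -> 0 <= x -> Rbar_lt x (radius a) -> 0 <= f1 a x.
Proof.
  intros. pose proof (PSd_nonneg a H).
  pose proof (pser_lower (PS_derive a) x H2 H0 ltac:(rewrite CV_radius_derive; auto) 0).
  simpl in H3. unfold f1. specialize (H2 0%nat). nra.
Qed.

Lemma f2_nn a x : (forall n, 0 <= a n) -> 0 <= x -> Rbar_lt x (radius a) -> 0 <= f2 a x.
Proof.
  intros. pose proof (PSd_nonneg _ (PSd_nonneg a H)).
  pose proof (pser_lower _ x H2 H0 ltac:(rewrite !CV_radius_derive; auto) 0).
  simpl in H3. unfold f2. specialize (H2 0%nat). nra.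
Qed.

Lemma Dg a x : 0 <= x -> Rbar_lt x (radius a) -> is_derive (gg a) x (x * f2 a x).
Proof.
  intros. unfold gg.
  pose proof (proj1 (is_derive_Reals _ _ _) (D0 a x H H0)).
  pose proof (proj1 (is_derive_Reals _ _ _) (D1 a x H H0)).
  apply is_derive_Reals.
  replace (x * f2 a x) with ((1 * f1 a x + x * f2 a x) - f1 a x) by ring.
  apply (derivable_pt_lim_minus (fun t => t * f1 a t) (f0 a)); auto.
  apply (derivable_pt_lim_mult (fun t => t) (f1 a)); auto.
  apply derivable_pt_lim_id.
Qed.

Lemma Dphi a x : 0 < x -> Rbar_lt x (radius a) -> is_derive (phi a) x (dphi a x).
Proof.
  intros. unfold phi, dphi, gg.
  pose proof (proj1 (is_derive_Reals _ _ _) (D0 a x ltac:(lra) H0)).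
  apply is_derive_Reals.
  pose proof (derivable_pt_lim_div (f0 a) (fun t => t) x (f1 a x) 1 H1 (derivable_pt_lim_id x) ltac:(lra)) as Hd.
  match type of Hd with derivable_pt_lim _ _ ?v => replace ((x * f1 a x - f0 a x) / x ^ 2) with v end.
  exact Hd. unfold Rsqr. field. lra.
Qed.

Lemma mean_eq a x : 0 <= x -> Rbar_lt x (radius a) -> mean_f a x = x * f1 a x / f0 a x.
Proof.
  intros. unfold mean_f, psf. rewrite Derive_PSeries. reflexivity. apply rabs_ok; auto.
Qed.

Definition HypA a tau := (forall n, 0 <= a n) /\ 0 < a 0%nat /\ is_apex a tau.

Lemma g_tau a tau : HypA a tau -> gg a tau = 0.
Proof.
  intros [Hn [Ha0 [Ht [HR Hm]]]].
  rewrite mean_eq in Hm by (auto; lra).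
  pose proof (f0_pos a tau Hn Ha0 ltac:(lra) HR).
  assert (E: tau * f1 a tau = tau * f1 a tau / f0 a tau * f0 a tau) by (field; lra).
  rewrite Hm in E. unfold gg. lra.
Qed.

Lemma f2pos a tau : HypA a tau -> forall x, 0 < x -> Rbar_lt x (radius a) -> 0 < f2 a x.
Proof.
  intros HA x Hx HxR. pose proof (g_tau a tau HA) as Hg.
  destruct HA as [Hn [Ha0 [Ht [HR Hm]]]].
  destruct (mvt (gg a) (fun z => z * f2 a z) 0 tau) as [c [Hc E]]. lra.
  { intros z Hz. apply Dg. lra. apply (rlt_mono _ z tau); auto. lra. }
  rewrite Hg in E. unfold gg in E. unfold f0 in E. rewrite PSeries_0 in E.
  assert (Hc2 : f2 a c <> 0). { intros Z. rewrite Z in E. nra. }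
  set (b := PS_derive (PS_derive a)).
  assert (Hb : forall n, 0 <= b n) by (apply PSd_nonneg, PSd_nonneg; auto).
  destruct (classic (exists n, b n <> 0)) as [[n Hbn]|Hno].
  - assert (0 < b n) by (specialize (Hb n); lra).
    pose proof (pser_lower b x Hb ltac:(lra) ltac:(unfold b; rewrite !CV_radius_derive; auto) n).
    unfold f2. fold b. assert (0 < x ^ n) by (apply pow_lt; lra). nra.
  - exfalso. apply Hc2. unfold f2. fold b.
    rewrite (PSeries_ext b (fun _ => 0)). apply PSeries_const_0.
    intros n. destruct (Req_dec (b n) 0); auto. exfalso; apply Hno; exists n; auto.
Qed.

Lemma g_incr a tau : HypA a tau -> forall x y, 0 <= x -> x < y -> Rbar_lt y (radius a) -> gg a x < gg a y.
Proof.
  intros HA x y Hx Hxy Hy.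
  apply (incr_strict (gg a) (fun z => z * f2 a z)); auto.
  - intros z Hz. apply Dg. lra. apply (rlt_mono _ z y); auto; lra.
  - intros z Hz. apply Rmult_le_pos. lra. apply f2_nn. apply HA. lra. apply (rlt_mono _ z y); auto; lra.
  - intros z Hz. apply Rmult_lt_0_compat. lra. apply (f2pos a tau HA). lra. apply (rlt_mono _ z y); auto; lra.
Qed.

Lemma g_le0 a tau : HypA a tau -> forall x, 0 <= x -> x <= tau -> gg a x <= 0.
Proof.
  intros HA x H0 H1. rewrite <- (g_tau a tau HA).
  destruct (Req_dec x tau). subst; lra.
  left. apply (g_incr a tau HA); auto. lra. apply HA.
Qed.

Lemma g_lt0 a tau : HypA a tau -> forall x, 0 <= x -> x < tau -> gg a x < 0.
Proof.
  intros HA x H0 H1. rewrite <- (g_tau a tau HA).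
  apply (g_incr a tau HA); auto. apply HA.
Qed.

Lemma g_gt0 a tau : HypA a tau -> forall x, tau < x -> Rbar_lt x (radius a) -> 0 < gg a x.
Proof.
  intros HA x H0 H1. rewrite <- (g_tau a tau HA).
  apply (g_incr a tau HA); auto. destruct HA as [_ [_ [? _]]]; lra.
Qed.

Lemma phi_decr a tau : HypA a tau -> forall x y, 0 < x -> x < y -> y <= tau -> phi a y < phi a x.
Proof.
  intros HA x y Hx Hxy Hy. assert (HR : Rbar_lt tau (radius a)) by apply HA.
  apply (decr_strict (phi a) (dphi a)); auto.
  - intros z Hz. apply Dphi. lra. apply (rlt_mono _ z tau); auto; lra.
  - intros z Hz. unfold dphi, Rdiv. assert (0 < / z^2) by (apply Rinv_0_lt_compat; apply pow_lt; lra).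
    pose proof (g_le0 a tau HA z ltac:(lra) ltac:(lra)). nra.
  - intros z Hz. unfold dphi, Rdiv. assert (0 < / z^2) by (apply Rinv_0_lt_compat; apply pow_lt; lra).
    pose proof (g_lt0 a tau HA z ltac:(lra) ltac:(lra)). nra.
Qed.

Lemma phi_incr a tau : HypA a tau -> forall x y, tau <= x -> x < y -> Rbar_lt y (radius a) -> phi a x < phi a y.
Proof.
  intros HA x y Hx Hxy Hy. assert (Ht : 0 < tau) by apply HA.
  apply (incr_strict (phi a) (dphi a)); auto.
  - intros z Hz. apply Dphi. lra. apply (rlt_mono _ z y); auto; lra.
  - intros z Hz. unfold dphi, Rdiv. assert (0 < / z^2) by (apply Rinv_0_lt_compat; apply pow_lt; lra).
    destruct (Req_dec z tau). subst. rewrite (g_tau a tau HA). lra.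
    pose proof (g_gt0 a tau HA z ltac:(lra) ltac:(apply (rlt_mono _ z y); auto; lra)). nra.
  - intros z Hz. unfold dphi, Rdiv. assert (0 < / z^2) by (apply Rinv_0_lt_compat; apply pow_lt; lra).
    pose proof (g_gt0 a tau HA z ltac:(lra) ltac:(apply (rlt_mono _ z y); auto; lra)). nra.
Qed.


Lemma f0_mono a x y : (forall n, 0 <= a n) -> 0 <= x -> x <= y -> Rbar_lt y (radius a) -> f0 a x <= f0 a y.
Proof.
  intros Hn Hx Hxy Hy.
  destruct (mvt (f0 a) (f1 a) x y Hxy) as [c [Hc E]].
  { intros z Hz. apply D0. lra. apply (rlt_mono _ z y); auto; lra. }
  assert (0 <= f1 a c) by (apply f1_nn; auto; [lra| apply (rlt_mono _ c y); auto; lra]).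
  nra.
Qed.

Lemma pgf_eq a t s : pgf_Y a t s = f0 a (t * s) / f0 a t.
Proof. reflexivity. Qed.

Definition xs a t n := Nat.iter n (pgf_Y a t) 0.

Lemma pgf_mono a t s s' : (forall n, 0 <= a n) -> 0 < a 0%nat -> 0 < t -> Rbar_lt t (radius a) ->
  0 <= s -> s <= s' -> s' <= 1 -> pgf_Y a t s <= pgf_Y a t s'.
Proof.
  intros Hn Ha Ht HR H1 H2 H3. rewrite !pgf_eq.
  pose proof (f0_pos a t Hn Ha ltac:(lra) HR).
  unfold Rdiv. apply Rmult_le_compat_r. left; apply Rinv_0_lt_compat; lra.
  apply f0_mono; auto. nra. nra. apply (rlt_mono _ (t * s') t); auto. nra.
Qed.

Lemma pgf_pos a t s : (forall n, 0 <= a n) -> 0 < a 0%nat -> 0 < t -> Rbar_lt t (radius a) ->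
  0 <= s -> s <= 1 -> 0 < pgf_Y a t s.
Proof.
  intros Hn Ha Ht HR H1 H2. rewrite pgf_eq.
  pose proof (f0_pos a t Hn Ha ltac:(lra) HR).
  pose proof (f0_pos a (t * s) Hn Ha ltac:(nra) ltac:(apply (rlt_mono _ (t * s) t); auto; nra)).
  apply Rdiv_lt_0_compat; lra.
Qed.

Lemma pgf_cont a t s : (forall n, 0 <= a n) -> 0 < a 0%nat -> 0 < t -> Rbar_lt t (radius a) ->
  0 <= s -> s <= 1 -> continuity_pt (pgf_Y a t) s.
Proof.
  intros Hn Ha Ht HR H1 H2.
  pose proof (f0_pos a t Hn Ha ltac:(lra) HR).
  unfold pgf_Y.
  apply continuity_pt_div; [| apply continuity_pt_const; intros u v; reflexivity | cbv beta; change (psf a t) with (f0 a t); apply Rgt_not_eq; lra].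
  apply (continuity_pt_comp (fun u => t * u) (psf a)).
  apply continuity_pt_mult. apply continuity_pt_const; intros u v; reflexivity. apply continuity_pt_id.
  apply (deriv_cont _ _ (f1 a (t * s))). apply D0. nra. apply (rlt_mono _ (t * s) t); auto; nra.
Qed.

Lemma pgf_one a t : (forall n, 0 <= a n) -> 0 < a 0%nat -> 0 < t -> Rbar_lt t (radius a) ->
  pgf_Y a t 1 = 1.
Proof.
  intros Hn Ha Ht HR. pose proof (f0_pos a t Hn Ha ltac:(lra) HR).
  rewrite pgf_eq, Rmult_1_r. field. lra.
Qed.

Lemma xs_S a t n : xs a t (S n) = pgf_Y a t (xs a t n).
Proof. reflexivity. Qed.

Lemma xs_range a t : (forall n, 0 <= a n) -> 0 < a 0%nat -> 0 < t -> Rbar_lt t (radius a) ->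
  forall n, 0 <= xs a t n <= 1.
Proof.
  intros Hn Ha Ht HR n. induction n. simpl; lra.
  rewrite xs_S. split. left. apply pgf_pos; auto; lra.
  rewrite <- (pgf_one a t Hn Ha Ht HR). apply pgf_mono; auto; lra.
Qed.

Lemma xs_le_fix a t : (forall n, 0 <= a n) -> 0 < a 0%nat -> 0 < t -> Rbar_lt t (radius a) ->
  forall p, 0 <= p <= 1 -> pgf_Y a t p = p -> forall n, xs a t n <= p.
Proof.
  intros Hn Ha Ht HR p Hp Hf n. induction n. simpl. lra.
  rewrite xs_S, <- Hf. pose proof (xs_range a t Hn Ha Ht HR n).
  apply pgf_mono; auto; lra.
Qed.

Lemma xs_incr a t : (forall n, 0 <= a n) -> 0 < a 0%nat -> 0 < t -> Rbar_lt t (radius a) ->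
  forall n, xs a t n <= xs a t (S n).
Proof.
  intros Hn Ha Ht HR n. induction n.
  rewrite xs_S. simpl. left. apply pgf_pos; auto; lra.
  change (pgf_Y a t (xs a t n) <= pgf_Y a t (xs a t (S n))).
  pose proof (xs_range a t Hn Ha Ht HR n). pose proof (xs_range a t Hn Ha Ht HR (S n)).
  apply pgf_mono; auto; lra.
Qed.

Lemma q_props a t : (forall n, 0 <= a n) -> 0 < a 0%nat -> 0 < t -> Rbar_lt t (radius a) ->
  let q := extinction_prob a t in
  0 < q <= 1 /\ pgf_Y a t q = q /\ (forall p, 0 <= p <= 1 -> pgf_Y a t p = p -> q <= p).
Proof.
  intros Hn Ha Ht HR q.
  assert (Hex : ex_finite_lim_seq (xs a t)).
  { apply (ex_finite_lim_seq_incr _ 1). apply xs_incr; auto. intros n; apply xs_range; auto. }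
  pose proof (Lim_seq_correct' _ Hex) as HL.
  assert (Hq : q = real (Lim_seq (xs a t))) by reflexivity.
  rewrite <- Hq in HL.
  assert (Hfix : forall p, 0 <= p <= 1 -> pgf_Y a t p = p -> q <= p).
  { intros p Hp Hf. assert (Rbar_le q p).
    { apply (is_lim_seq_le (xs a t) (fun _ => p) q p). intros n. apply xs_le_fix; auto.
      exact HL. apply is_lim_seq_const. }
    simpl in H. exact H. }
  assert (Hq0 : 0 <= q).
  { assert (Rbar_le 0 q).
    { apply (is_lim_seq_le (fun _ => 0) (xs a t) 0 q). intros n. apply xs_range; auto.
      apply is_lim_seq_const. exact HL. }
    simpl in H. exact H. }
  assert (Hq1 : q <= 1) by (apply Hfix; [lra| apply pgf_one; auto]).
  assert (Hf : pgf_Y a t q = q).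
  { pose proof (is_lim_seq_continuous (pgf_Y a t) (xs a t) q (pgf_cont a t q Hn Ha Ht HR Hq0 Hq1) HL) as H1.
    pose proof (proj1 (is_lim_seq_incr_1 (xs a t) q) HL) as H2.
    assert (is_lim_seq (fun n => pgf_Y a t (xs a t n)) q) by exact H2.
    pose proof (is_lim_seq_unique _ _ H1). pose proof (is_lim_seq_unique _ _ H).
    rewrite H0 in H3. injection H3; auto. }
  split; [|split; auto].
  split; auto. rewrite <- Hf. apply pgf_pos; auto.
Qed.

Lemma fix_phi a t s : (forall n, 0 <= a n) -> 0 < a 0%nat -> 0 < t -> Rbar_lt t (radius a) ->
  0 < s -> s <= 1 -> (pgf_Y a t s = s <-> phi a (t * s) = phi a t).
Proof.
  intros Hn Ha Ht HR H1 H2. pose proof (f0_pos a t Hn Ha ltac:(lra) HR).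
  rewrite pgf_eq. unfold phi. split; intros E.
  - assert (f0 a (t * s) = s * f0 a t).
    { assert (f0 a (t * s) = f0 a (t * s) / f0 a t * f0 a t) by (field; lra).
      rewrite E in H0. exact H0. }
    rewrite H0. field. lra.
  - assert (f0 a (t * s) = s * f0 a t).
    { assert (f0 a (t * s) = f0 a (t * s) / (t * s) * (t * s)) by (field; lra).
      rewrite E in H0. rewrite H0. field. lra. }
    rewrite H0. field. lra.
Qed.

Lemma q_le_tau a tau t : HypA a tau -> 0 < t -> t <= tau -> extinction_prob a t = 1.
Proof.
  intros HA Ht Htt. pose proof HA as [Hn [Ha [Htau [HR _]]]].
  assert (HtR : Rbar_lt t (radius a)) by (apply (rlt_mono _ t tau); auto).
  destruct (q_props a t Hn Ha Ht HtR) as [[Hq0 Hq1] [Hf _]].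
  destruct (Req_dec (extinction_prob a t) 1) as [E|NE]; auto. exfalso.
  set (q := extinction_prob a t) in *.
  apply (fix_phi a t q Hn Ha Ht HtR Hq0 Hq1) in Hf.
  assert (phi a t < phi a (t * q)). { apply (phi_decr a tau HA); nra. }
  lra.
Qed.

Lemma phi_cont a x : 0 < x -> Rbar_lt x (radius a) -> continuity_pt (phi a) x.
Proof. intros. apply (deriv_cont _ _ (dphi a x)). apply Dphi; auto. Qed.

Lemma q_gt_tau a tau t : HypA a tau -> tau < t -> Rbar_lt t (radius a) ->
  0 < t * extinction_prob a t < tau /\ phi a (t * extinction_prob a t) = phi a t.
Proof.
  intros HA Htt HtR. pose proof HA as [Hn [Ha [Htau [HR _]]]].
  assert (Ht : 0 < t) by lra.
  destruct (q_props a t Hn Ha Ht HtR) as [[Hq0 Hq1] [Hf Hmin]].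
  set (q := extinction_prob a t) in *.
  pose proof (f0_pos a t Hn Ha ltac:(lra) HtR) as Hft.
  assert (Hpt : 0 < phi a t) by (unfold phi; apply Rdiv_lt_0_compat; lra).
  set (lo := Rmin (tau / 2) (a 0%nat / (2 * phi a t))).
  assert (Hlo0 : 0 < lo). { unfold lo. apply Rmin_glb_lt. lra. apply Rdiv_lt_0_compat; lra. }
  assert (Hlo1 : lo < tau). { unfold lo. pose proof (Rmin_l (tau/2) (a 0%nat / (2 * phi a t))). lra. }
  assert (Hlo2 : lo <= a 0%nat / (2 * phi a t)) by apply Rmin_r.
  assert (HloR : Rbar_lt lo (radius a)) by (apply (rlt_mono _ lo tau); auto; lra).
  assert (Hplo : phi a t < phi a lo).
  { unfold phi. pose proof (f0_pos a lo Hn Ha ltac:(lra) HloR).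
    apply Rlt_le_trans with (a 0%nat / lo).
    - assert (lo * (2 * phi a t) <= a 0%nat).
      { assert (a 0%nat / (2 * phi a t) * (2 * phi a t) = a 0%nat) by (field; lra).
        nra. }
      assert (E : a 0%nat / lo * lo = a 0%nat) by (field; lra).
      assert (phi a t * lo < a 0%nat / lo * lo) by (rewrite E; nra).
      fold (phi a t). apply Rmult_lt_reg_r with lo; auto.
    - unfold Rdiv. apply Rmult_le_compat_r; auto. left; apply Rinv_0_lt_compat; lra. }
  assert (Hptau : phi a tau < phi a t) by (apply (phi_incr a tau HA); auto; lra).
  destruct (Ranalysis5.IVT_interv (fun z => phi a t - phi a z) lo tau) as [s0 [Hs0 Es0]].
  { intros z Hz. apply continuity_pt_minus. apply continuity_pt_const; intros u v; reflexivity.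
    apply phi_cont. lra. apply (rlt_mono _ z tau); auto; lra. }
  lra. lra. lra.
  assert (Hs0t : s0 < tau). { destruct (Req_dec s0 tau). subst. lra. lra. }
  assert (Hp0 : pgf_Y a t (s0 / t) = s0 / t).
  { apply fix_phi; auto. apply Rdiv_lt_0_compat; lra. apply Rmult_le_reg_r with t; auto.
    unfold Rdiv; rewrite Rmult_assoc, Rinv_l by lra. lra.
    replace (t * (s0 / t)) with s0 by (field; lra). lra. }
  assert (Hqs : q <= s0 / t).
  { apply Hmin; auto. split. left; apply Rdiv_lt_0_compat; lra.
    apply Rmult_le_reg_r with t; auto. unfold Rdiv; rewrite Rmult_assoc, Rinv_l by lra. lra. }
  assert (Hq1' : q < 1).
  { apply Rle_lt_trans with (s0 / t); auto. apply Rmult_lt_reg_r with t; auto.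
    unfold Rdiv; rewrite Rmult_assoc, Rinv_l by lra. lra. }
  apply (fix_phi a t q Hn Ha Ht HtR Hq0 Hq1) in Hf.
  split; auto. split. nra.
  destruct (Rlt_or_le (t * q) tau) as [L|L]; auto. exfalso.
  assert (phi a (t * q) < phi a t) by (apply (phi_incr a tau HA); auto; nra).
  lra.
Qed.


Lemma loc_R (R0 : Rbar) (t0 : R) : Rbar_lt t0 R0 -> exists d, 0 < d /\ forall x, Rabs (x - t0) < d -> Rbar_lt x R0.
Proof.
  destruct R0 as [r| |]; intros H; simpl in H.
  - exists (r - t0). split. lra. intros x Hx. apply Rabs_def2 in Hx. simpl. lra.
  - exists 1. split. lra. intros; simpl; auto.
  - contradiction.
Qed.

Lemma cont_pt_eps (F : R -> R) (x : R) : continuity_pt F x -> forall e, 0 < e ->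
  exists d, 0 < d /\ forall y, Rabs (y - x) < d -> Rabs (F y - F x) < e.
Proof.
  intros H e He. destruct (H e He) as [d [Hd Hd2]]. exists d. split; auto.
  intros y Hy. destruct (Req_dec y x). subst. rewrite Rminus_diag, Rabs_R0. auto.
  apply (Hd2 y). split. split. exact I. congruence. exact Hy.
Qed.

Lemma ball_lt (x y : R) (e : posreal) : ball x e y -> x - e < y < x + e.
Proof. intros H. pose proof (proj1 (ball_R x y e) H) as H1. apply Rabs_def2 in H1. split; lra. Qed.

Lemma mean_lt1 a tau x : HypA a tau -> 0 < x -> x < tau -> mean_f a x < 1.
Proof.
  intros HA Hx Hxt. pose proof HA as [Hn [Ha [Htau [HR _]]]].
  assert (HxR : Rbar_lt x (radius a)) by (apply (rlt_mono _ x tau); auto; lra).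
  rewrite mean_eq by (auto; lra). pose proof (g_lt0 a tau HA x ltac:(lra) Hxt). unfold gg in H.
  pose proof (f0_pos a x Hn Ha ltac:(lra) HxR).
  apply Rmult_lt_reg_r with (f0 a x). lra. unfold Rdiv. rewrite Rmult_assoc, Rinv_l by lra. lra.
Qed.

Lemma mean_gt1 a tau x : HypA a tau -> tau < x -> Rbar_lt x (radius a) -> 1 < mean_f a x.
Proof.
  intros HA Hx HxR. pose proof HA as [Hn [Ha [Htau [HR _]]]].
  rewrite mean_eq by (auto; lra). pose proof (g_gt0 a tau HA x Hx HxR). unfold gg in H.
  pose proof (f0_pos a x Hn Ha ltac:(lra) HxR).
  apply Rmult_lt_reg_r with (f0 a x). lra. unfold Rdiv. rewrite Rmult_assoc, Rinv_l by lra. lra.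
Qed.

Lemma deriv_below a tau t : HypA a tau -> 0 < t -> t < tau ->
  let q := extinction_prob a in
  is_derive q t (q t / t * ((1 - mean_f a t) / (1 - mean_f a (t * q t)) - 1)).
Proof.
  intros HA Ht Htt q.
  assert (Hq : q t = 1) by (apply (q_le_tau a tau); auto; lra).
  rewrite Hq, Rmult_1_r.
  pose proof (mean_lt1 a tau t HA Ht Htt).
  replace (1 / t * ((1 - mean_f a t) / (1 - mean_f a t) - 1)) with 0 by (field; repeat split; lra).
  apply (is_derive_ext_loc (fun _ => 1)).
  - exists (mkposreal (Rmin t (tau - t)) ltac:(apply Rmin_glb_lt; lra)). intros y0 Hy. set (y := (y0 : R)) in *.
    apply ball_lt in Hy. simpl in Hy.
    pose proof (Rmin_l t (tau - t)). pose proof (Rmin_r t (tau - t)).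
    symmetry. apply (q_le_tau a tau); auto; lra.
  - apply (is_derive_const (K:=R_AbsRing) (V:=R_NormedModule) 1 t).
Qed.

Definition sgm a t := t * extinction_prob a t.

Lemma sig_cont a tau t0 : HypA a tau -> tau < t0 -> Rbar_lt t0 (radius a) ->
  is_lim (sgm a) t0 (sgm a t0).
Proof.
  intros HA Ht0 HR0. pose proof HA as [Hn [Ha [Htau [HR _]]]].
  apply is_lim_spec. intros eps.
  destruct (q_gt_tau a tau t0 HA Ht0 HR0) as [[Hs1 Hs2] Hs3]. fold (sgm a t0) in Hs1, Hs2, Hs3.
  set (s0 := sgm a t0) in *.
  set (lo := Rmax (s0 - eps / 2) (s0 / 2)).
  set (hi := Rmin (s0 + eps / 2) ((s0 + tau) / 2)).
  pose proof (cond_pos eps) as He.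
  assert (Hlo : 0 < lo < s0).
  { unfold lo. split. apply Rlt_le_trans with (s0/2). lra. apply Rmax_r.
    apply Rmax_lub_lt; lra. }
  assert (Hhi : s0 < hi < tau).
  { unfold hi. split. apply Rmin_glb_lt; lra. apply Rle_lt_trans with ((s0+tau)/2). apply Rmin_r. lra. }
  assert (P1 : phi a s0 < phi a lo) by (apply (phi_decr a tau HA); lra).
  assert (P2 : phi a hi < phi a s0) by (apply (phi_decr a tau HA); lra).
  destruct (cont_pt_eps (phi a) t0 (phi_cont a t0 ltac:(lra) HR0)
     (Rmin (phi a lo - phi a s0) (phi a s0 - phi a hi)) ltac:(apply Rmin_glb_lt; lra)) as [d1 [Hd1 Hc1]].
  destruct (loc_R _ t0 HR0) as [d2 [Hd2 Hc2]].
  exists (mkposreal (Rmin d1 (Rmin d2 (t0 - tau))) ltac:(repeat apply Rmin_glb_lt; lra)).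
  intros y0 Hy Hyt. set (y := (y0 : R)) in *. apply ball_lt in Hy. simpl in Hy.
  pose proof (Rmin_l d1 (Rmin d2 (t0 - tau))). pose proof (Rmin_r d1 (Rmin d2 (t0 - tau))).
  pose proof (Rmin_l d2 (t0 - tau)). pose proof (Rmin_r d2 (t0 - tau)).
  assert (Hy1 : Rabs (y - t0) < d1) by (apply Rabs_def1; lra).
  assert (Hy2 : Rabs (y - t0) < d2) by (apply Rabs_def1; lra).
  specialize (Hc1 y Hy1). specialize (Hc2 y Hy2).
  pose proof (Rmin_l (phi a lo - phi a s0) (phi a s0 - phi a hi)).
  pose proof (Rmin_r (phi a lo - phi a s0) (phi a s0 - phi a hi)).
  apply Rabs_def2 in Hc1. destruct Hc1 as [Hc1a Hc1b].
  destruct (q_gt_tau a tau y HA ltac:(lra) Hc2) as [[Hy3 Hy4] Hy5]. fold (sgm a y) in Hy3, Hy4, Hy5.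
  rewrite <- Hs3 in Hc1a, Hc1b. rewrite <- Hy5 in Hc1a, Hc1b.
  assert (sgm a y < hi).
  { destruct (Rlt_or_le (sgm a y) hi) as [L|L]; auto. exfalso.
    destruct (Req_dec (sgm a y) hi) as [E|NE]. rewrite E in Hc1a, Hc1b. lra.
    assert (phi a (sgm a y) < phi a hi) by (apply (phi_decr a tau HA); lra). lra. }
  assert (lo < sgm a y).
  { destruct (Rlt_or_le lo (sgm a y)) as [L|L]; auto. exfalso.
    destruct (Req_dec (sgm a y) lo) as [E|NE]. rewrite E in Hc1a, Hc1b. lra.
    assert (phi a lo < phi a (sgm a y)) by (apply (phi_decr a tau HA); lra). lra. }
  assert (s0 - eps/2 <= lo) by apply Rmax_l.
  assert (hi <= s0 + eps/2) by apply Rmin_l.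
  apply Rabs_def1; lra.
Qed.

Lemma deriv_above a tau t : HypA a tau -> tau < t -> Rbar_lt t (radius a) ->
  let q := extinction_prob a in
  is_derive q t (q t / t * ((1 - mean_f a t) / (1 - mean_f a (t * q t)) - 1)).
Proof.
  intros HA Htt HR0 q. pose proof HA as [Hn [Ha [Htau [HR _]]]].
  destruct (q_gt_tau a tau t HA Htt HR0) as [[Hs1 Hs2] Hs3]. fold (sgm a t) in Hs1, Hs2, Hs3.
  destruct (loc_R _ t HR0) as [d2 [Hd2 Hc2]].
  assert (HsR : Rbar_lt (sgm a t) (radius a)) by (apply (rlt_mono _ _ tau); auto; lra).
  assert (HD : is_derive (sgm a) t (dphi a t / dphi a (sgm a t))).
  { apply (implicit_deriv (phi a) (sgm a)).
    - apply Dphi; auto; lra.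
    - apply Dphi; auto.
    - unfold dphi. pose proof (g_lt0 a tau HA (sgm a t) ltac:(lra) Hs2).
      assert (0 < sgm a t ^ 2) by (apply pow_lt; lra).
      unfold Rdiv. apply Rmult_integral_contrapositive. split. lra.
      apply Rinv_neq_0_compat; lra.
    - exists (mkposreal (Rmin d2 (t - tau)) ltac:(apply Rmin_glb_lt; lra)).
      intros y0 Hy. set (y := (y0 : R)) in *. apply ball_lt in Hy. simpl in Hy.
      pose proof (Rmin_l d2 (t - tau)). pose proof (Rmin_r d2 (t - tau)).
      assert (HyR : Rbar_lt y (radius a)) by (apply Hc2; apply Rabs_def1; lra).
      split. apply (q_gt_tau a tau y HA); auto; lra.
      intros Hyt. destruct (Rlt_or_le y t) as [L|L].
      + assert (phi a y < phi a t) by (apply (phi_incr a tau HA); auto; lra). lra.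
      + assert (phi a t < phi a y) by (apply (phi_incr a tau HA); auto; lra). lra.
    - apply (sig_cont a tau); auto. }
  assert (HD2 : is_derive (fun y => sgm a y / y) t
           ((dphi a t / dphi a (sgm a t) * t - 1 * sgm a t) / Rsqr t)).
  { apply is_derive_Reals.
    pose proof (derivable_pt_lim_div (sgm a) (fun y => y) t _ _ (proj1 (is_derive_Reals _ _ _) HD) (derivable_pt_lim_id t) ltac:(lra)) as Hd.
    exact Hd. }
  assert (HE : locally t (fun y => sgm a y / y = q y)).
  { exists (mkposreal t ltac:(lra)). intros y0 Hy. set (y := (y0 : R)) in *. apply ball_lt in Hy. simpl in Hy.
    unfold sgm, q. field. lra. }
  pose proof (is_derive_ext_loc _ _ _ _ HE HD2) as HD3.
  match goal with |- is_derive _ _ ?v => replace v with ((dphi a t / dphi a (sgm a t) * t - 1 * sgm a t) / Rsqr t) end.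
  exact HD3.
  assert (Hq : q t = sgm a t / t) by (unfold sgm, q; field; lra).
  change (t * q t) with (sgm a t). rewrite Hq.
  rewrite (mean_eq a t) by (auto; lra). rewrite (mean_eq a (sgm a t)) by (auto; lra).
  unfold dphi, gg.
  pose proof (g_lt0 a tau HA (sgm a t) ltac:(lra) Hs2) as Gs. unfold gg in Gs.
  pose proof (g_gt0 a tau HA t Htt HR0) as Gt. unfold gg in Gt.
  pose proof (f0_pos a t Hn Ha ltac:(lra) HR0) as Ft.
  unfold phi in Hs3.
  assert (EF : f0 a (sgm a t) = sgm a t * f0 a t / t).
  { assert (f0 a (sgm a t) = f0 a (sgm a t) / sgm a t * sgm a t) by (field; lra).
    rewrite Hs3 in H. rewrite H. field. lra. }
  rewrite EF in Gs |- *.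
  set (s := sgm a t) in *. set (F := f0 a t) in *. set (A := f1 a t) in *. set (Bs := f1 a s) in *.
  assert (Gs' : s * Bs * t - s * F < 0).
  { assert (s * Bs - s * F / t < 0) by exact Gs.
    assert ((s * Bs - s * F / t) * t < 0) by (apply Rmult_neg_pos; auto; lra).
    replace (s * Bs * t - s * F) with ((s * Bs - s * F / t) * t) by (field; lra). lra. }
  assert (Bs - F / t <> 0).
  { intros Z. assert (s * (Bs - F / t) = 0) by (rewrite Z; ring). lra. }
  assert (F - Bs * t > 0) by nra. unfold Rsqr. field. repeat split; try lra.
Qed.


Lemma sq_cmp c1 c2 u v : 0 < c1 -> c1 <= c2 -> 0 < u -> 0 < v -> c1 * v^2 <= c2 * u^2 -> c1 * v <= c2 * u.
Proof.
  intros. destruct (Rle_or_lt (c1 * v) (c2 * u)) as [L|L]; auto. exfalso.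
  assert ((c2 * u) * (c2 * u) < (c1 * v) * (c1 * v)).
  { apply Rmult_le_0_lt_compat; nra. }
  assert (c1 * (c1 * v^2) <= c1 * (c2 * u^2)) by (apply Rmult_le_compat_l; lra).
  assert (c1 * (c2 * u^2) <= c2 * (c2 * u^2)) by (apply Rmult_le_compat_r; nra).
  nra.
Qed.

Lemma ratio_bound c1 c2 u v : 0 < c1 -> c1 <= c2 -> 0 < u -> 0 < v ->
  c1 * v^2 <= c2 * u^2 -> c1 * u^2 <= c2 * v^2 -> Rabs (u - v) <= (c2 - c1) * c2 / c1^2 * u.
Proof.
  intros H1 H2 H3 H4 H5 H6.
  pose proof (sq_cmp c1 c2 u v H1 H2 H3 H4 H5) as A1.
  pose proof (sq_cmp c1 c2 v u H1 H2 H4 H3 H6) as A2.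
  assert (E : (c2 - c1) * c2 / c1^2 * u = ((c2 - c1) / c1) * ((c2 / c1) * u)) by (field; lra).
  rewrite E.
  assert (Hk : 0 <= (c2 - c1) / c1) by (unfold Rdiv; apply Rmult_le_pos; [lra| left; apply Rinv_0_lt_compat; lra]).
  assert (Hr : 1 <= c2 / c1) by (apply Rmult_le_reg_r with c1; auto; unfold Rdiv; rewrite Rmult_assoc, Rinv_l; lra).
  assert (Hv : v <= c2 / c1 * u) by (apply Rmult_le_reg_r with c1; auto; replace (c2 / c1 * u * c1) with (c2 * u) by (field; lra); lra).
  assert (Hu : u <= c2 / c1 * v) by (apply Rmult_le_reg_r with c1; auto; replace (c2 / c1 * v * c1) with (c2 * v) by (field; lra); lra).
  apply Rabs_le. split.
  -
    assert (v - u <= (c2 - c1) / c1 * u).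
    { replace ((c2 - c1) / c1 * u) with (c2 / c1 * u - u) by (field; lra). lra. }
    assert ((c2 - c1) / c1 * u <= (c2 - c1) / c1 * (c2 / c1 * u)) by (apply Rmult_le_compat_l; nra).
    lra.
  - assert (u - v <= (c2 - c1) / c1 * v).
    { replace ((c2 - c1) / c1 * v) with (c2 / c1 * v - v) by (field; lra). lra. }
    assert ((c2 - c1) / c1 * v <= (c2 - c1) / c1 * (c2 / c1 * u)) by (apply Rmult_le_compat_l; lra).
    lra.
Qed.

Lemma final_est tau t s lam eps : 0 < tau -> tau < t -> 0 < eps ->
  Rabs ((t - tau) - (tau - s)) <= lam * (t - tau) -> lam <= tau * eps / 4 ->
  t - tau < eps * tau ^ 2 / 4 ->
  Rabs ((s / t - 1) / (t - tau) - (- 2 / tau)) < eps.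
Proof.
  intros Ht Htt He Hl Hlam Hu.
  set (u := t - tau) in *. set (v := tau - s) in *.
  assert (Hu0 : 0 < u) by (unfold u; lra).
  assert (E : (s / t - 1) / u - (- 2 / tau) = (tau * (u - v) + 2 * u ^ 2) / (t * u * tau)).
  { unfold u, v. field. repeat split; lra. }
  rewrite E.
  assert (HD : 0 < t * u * tau) by (apply Rmult_lt_0_compat; [apply Rmult_lt_0_compat|]; lra).
  assert (HD2 : tau * tau * u <= t * u * tau) by nra.
  assert (Hl1 : - (lam * u) <= u - v) by (pose proof (Rle_abs (-(u - v))); rewrite Rabs_Ropp in H; lra).
  assert (Hl2 : u - v <= lam * u) by (pose proof (Rle_abs (u - v)); lra).
  assert (HN : Rabs (tau * (u - v) + 2 * u ^ 2) < eps * (tau * tau * u)).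
  { apply Rabs_def1.
    - assert (tau * (u - v) <= tau * (lam * u)) by (apply Rmult_le_compat_l; lra).
      assert (tau * (lam * u) <= tau * (tau * eps / 4 * u)) by (apply Rmult_le_compat_l; [lra| apply Rmult_le_compat_r; lra]).
      assert (2 * u ^ 2 < 2 * (eps * tau ^ 2 / 4) * u) by (simpl; nra).
      nra.
    - assert (tau * (- (lam * u)) <= tau * (u - v)) by (apply Rmult_le_compat_l; lra).
      assert (tau * (lam * u) <= tau * (tau * eps / 4 * u)) by (apply Rmult_le_compat_l; [lra| apply Rmult_le_compat_r; lra]).
      assert (0 <= 2 * u ^ 2) by (simpl; nra).
      nra. }
  unfold Rdiv. rewrite Rabs_mult, Rabs_inv, (Rabs_pos_eq (t * u * tau)) by lra.
  apply Rmult_lt_reg_r with (t * u * tau); auto.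
  rewrite Rmult_assoc, Rinv_l by lra. nra.
Qed.


Lemma der_sub (F G : R -> R) x lF lG : is_derive F x lF -> is_derive G x lG ->
  is_derive (fun y => F y - G y) x (lF - lG).
Proof.
  intros H1 H2. apply is_derive_Reals.
  exact (derivable_pt_lim_minus F G x lF lG (proj1 (is_derive_Reals _ _ _) H1) (proj1 (is_derive_Reals _ _ _) H2)).
Qed.

Lemma der_quad (c t0 x : R) : is_derive (fun y => c / 2 * (y - t0) ^ 2) x (c * (x - t0)).
Proof. auto_derive. auto. simpl. field. Qed.

Lemma der_quad2 (k c t0 x : R) : is_derive (fun y => k + c / 2 * (y - t0) ^ 2) x (c * (x - t0)).
Proof. auto_derive. auto. simpl. field. Qed.

Lemma der_lin (c t0 x : R) : is_derive (fun y => c * (y - t0)) x c.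
Proof. auto_derive. auto. ring. Qed.

Lemma der_dphi a tau : HypA a tau -> is_derive (dphi a) tau (f2 a tau / tau).
Proof.
  intros HA. pose proof HA as [Hn [Ha [Htau [HR _]]]].
  pose proof (g_tau a tau HA) as Hg.
  pose proof (proj1 (is_derive_Reals _ _ _) (Dg a tau ltac:(lra) HR)) as H1.
  pose proof (derivable_pt_lim_div (gg a) (fun y => y ^ 2) tau _ _ H1 (derivable_pt_lim_pow tau 2)
    ltac:(apply Rgt_not_eq; apply pow_lt; lra)) as Hd.
  apply is_derive_Reals. unfold dphi.
  match type of Hd with derivable_pt_lim _ _ ?v => replace (f2 a tau / tau) with v end.
  exact Hd. rewrite Hg. simpl. unfold Rsqr. field. lra.
Qed.

Lemma near_tau a tau : HypA a tau -> exists d, 0 < d /\ forall x, Rabs (x - tau) < d -> 0 < x /\ Rbar_lt x (radius a).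
Proof.
  intros HA. pose proof HA as [Hn [Ha [Htau [HR _]]]].
  destruct (loc_R _ tau HR) as [d [Hd Hc]]. exists (Rmin d tau). split. apply Rmin_glb_lt; lra.
  intros x Hx. pose proof (Rmin_l d tau). pose proof (Rmin_r d tau). split.
  apply Rabs_def2 in Hx. lra. apply Hc. lra.
Qed.

Lemma quad_lower a tau c : HypA a tau -> c < f2 a tau / tau ->
  exists d, 0 < d /\ forall x, Rabs (x - tau) < d -> c / 2 * (x - tau) ^ 2 <= phi a x - phi a tau.
Proof.
  intros HA Hc. pose proof (g_tau a tau HA) as Hg.
  destruct (near_tau a tau HA) as [d0 [Hd0 Hn0]].
  destruct (quad_min (fun y => phi a y - (phi a tau + c / 2 * (y - tau) ^ 2))
                     (fun y => dphi a y - c * (y - tau)) tau d0 (f2 a tau / tau - c)) as [d [Hd Hq]]; auto.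
  - intros x Hx. destruct (Hn0 x Hx). apply der_sub. apply Dphi; auto.
    apply der_quad2.
  - unfold dphi. rewrite Hg. unfold Rdiv. ring.
  - apply der_sub. apply der_dphi; auto. apply der_lin.
  - lra.
  - exists d. split; auto. intros x Hx. specialize (Hq x Hx). simpl in Hq.
    replace (tau - tau) with 0 in Hq by ring. simpl in Hq. lra.
Qed.

Lemma quad_upper a tau c : HypA a tau -> f2 a tau / tau < c ->
  exists d, 0 < d /\ forall x, Rabs (x - tau) < d -> phi a x - phi a tau <= c / 2 * (x - tau) ^ 2.
Proof.
  intros HA Hc. pose proof (g_tau a tau HA) as Hg.
  destruct (near_tau a tau HA) as [d0 [Hd0 Hn0]].
  destruct (quad_min (fun y => (phi a tau + c / 2 * (y - tau) ^ 2) - phi a y)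
                     (fun y => c * (y - tau) - dphi a y) tau d0 (c - f2 a tau / tau)) as [d [Hd Hq]]; auto.
  - intros x Hx. destruct (Hn0 x Hx). apply der_sub. 2: apply Dphi; auto.
    apply der_quad2.
  - unfold dphi. rewrite Hg. unfold Rdiv. ring.
  - apply der_sub. apply der_lin. apply der_dphi; auto.
  - lra.
  - exists d. split; auto. intros x Hx. specialize (Hq x Hx). simpl in Hq.
    replace (tau - tau) with 0 in Hq by ring. simpl in Hq. lra.
Qed.

Lemma right_lim a tau : HypA a tau ->
  filterlim (fun t => (extinction_prob a t - 1) / (t - tau)) (at_right tau) (locally (- 2 / tau)).
Proof.
  intros HA. pose proof HA as [Hn [Ha [Htau [HR _]]]].
  apply filterlim_locally. intros eps. pose proof (cond_pos eps) as He.
  set (K := f2 a tau / tau).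
  assert (HK : 0 < K) by (unfold K; apply Rdiv_lt_0_compat; auto; apply (f2pos a tau HA); auto).
  set (kap := Rmin (K / 2) (K * tau * eps / 48)).
  assert (Hk0 : 0 < kap). { unfold kap. apply Rmin_glb_lt. lra. apply Rdiv_lt_0_compat. apply Rmult_lt_0_compat. apply Rmult_lt_0_compat. exact HK. exact Htau. exact He. lra. }
  assert (Hk1 : kap <= K / 2) by apply Rmin_l.
  assert (Hk2 : kap <= K * tau * eps / 48) by apply Rmin_r.
  set (c1 := K - kap). set (c2 := K + kap).
  destruct (quad_lower a tau c1 HA ltac:(unfold c1; fold K; lra)) as [d1 [Hd1 Q1]].
  destruct (quad_upper a tau c2 HA ltac:(unfold c2; fold K; lra)) as [d2 [Hd2 Q2]].
  destruct (near_tau a tau HA) as [d0 [Hd0 N0]].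
  set (db := Rmin (Rmin d0 tau) (Rmin d1 d2)).
  assert (Hdb : 0 < db) by (unfold db; repeat apply Rmin_glb_lt; lra).
  assert (Hdb0 : db <= d0) by (unfold db; eapply Rle_trans; [apply Rmin_l| apply Rmin_l]).
  assert (Hdbt : db <= tau) by (unfold db; eapply Rle_trans; [apply Rmin_l| apply Rmin_r]).
  assert (Hdb1 : db <= d1) by (unfold db; eapply Rle_trans; [apply Rmin_r| apply Rmin_l]).
  assert (Hdb2 : db <= d2) by (unfold db; eapply Rle_trans; [apply Rmin_r| apply Rmin_r]).
  set (lo := tau - db / 2).
  assert (Hlo : Rabs (lo - tau) < d1) by (unfold lo; rewrite Rabs_left by lra; lra).
  pose proof (Q1 lo Hlo) as Plo.
  assert (Hc1 : 0 < c1) by (unfold c1; lra).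
  assert (Hc12 : c1 <= c2) by (unfold c1, c2; lra).
  set (dd := Rmin db (Rmin (db * c1 / (2 * c2)) (eps * tau ^ 2 / 4))).
  assert (Hdd : 0 < dd).
  { unfold dd. repeat apply Rmin_glb_lt; auto. apply Rdiv_lt_0_compat; nra.
    apply Rdiv_lt_0_compat; [apply Rmult_lt_0_compat; [lra| apply pow_lt; lra]| lra]. }
  exists (mkposreal dd Hdd). intros y0 Hy Hyt. set (t := (y0 : R)) in *.
  apply ball_lt in Hy. simpl in Hy.
  assert (Hu1 : t - tau < db) by (pose proof (Rmin_l db (Rmin (db * c1 / (2 * c2)) (eps * tau ^ 2 / 4))); fold dd in H; lra).
  assert (Hu2 : t - tau < db * c1 / (2 * c2)).
  { pose proof (Rmin_r db (Rmin (db * c1 / (2 * c2)) (eps * tau ^ 2 / 4))). fold dd in H.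
    pose proof (Rmin_l (db * c1 / (2 * c2)) (eps * tau ^ 2 / 4)). lra. }
  assert (Hu3 : t - tau < eps * tau ^ 2 / 4).
  { pose proof (Rmin_r db (Rmin (db * c1 / (2 * c2)) (eps * tau ^ 2 / 4))). fold dd in H.
    pose proof (Rmin_r (db * c1 / (2 * c2)) (eps * tau ^ 2 / 4)). lra. }
  assert (Ht0 : Rabs (t - tau) < d0) by (rewrite Rabs_pos_eq; lra).
  destruct (N0 t Ht0) as [_ HtR].
  destruct (q_gt_tau a tau t HA Hyt HtR) as [[Hs1 Hs2] Hs3]. fold (sgm a t) in Hs1, Hs2, Hs3.
  set (s := sgm a t) in *.
  assert (Hqt : extinction_prob a t = s / t) by (unfold s, sgm; field; lra).
  rewrite Hqt. apply ball_R.
  assert (Bt1 : c1 / 2 * (t - tau) ^ 2 <= phi a t - phi a tau) by (apply Q1; rewrite Rabs_pos_eq; lra).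
  assert (Bt2 : phi a t - phi a tau <= c2 / 2 * (t - tau) ^ 2) by (apply Q2; rewrite Rabs_pos_eq; lra).
  assert (Hsmall : phi a t < phi a lo).
  { assert (c2 / 2 * (t - tau) ^ 2 < c1 / 2 * (db / 2) ^ 2).
    { assert (0 <= t - tau) by lra.
      assert (Hsq : (t - tau) ^ 2 < (db * c1 / (2 * c2)) ^ 2).
      { simpl. rewrite !Rmult_1_r. apply Rmult_le_0_lt_compat; lra. }
      assert (E : (db * c1 / (2 * c2)) ^ 2 = db ^ 2 * c1 * c1 / (4 * c2 * c2)) by (field; lra).
      rewrite E in Hsq.
      assert (H1 : c2 / 2 * (t - tau) ^ 2 < c2 / 2 * (db ^ 2 * c1 * c1 / (4 * c2 * c2))) by (apply Rmult_lt_compat_l; lra).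
      assert (E2 : c2 / 2 * (db ^ 2 * c1 * c1 / (4 * c2 * c2)) = c1 / 2 * (db / 2) ^ 2 * (c1 / c2)) by (field; lra).
      rewrite E2 in H1.
      assert (c1 / c2 <= 1) by (apply Rmult_le_reg_r with c2; [lra|]; unfold Rdiv; rewrite Rmult_assoc, Rinv_l; lra).
      assert (0 < c1 / 2 * (db / 2) ^ 2) by (apply Rmult_lt_0_compat; [lra| apply pow_lt; lra]).
      nra. }
    replace (lo - tau) with (- (db / 2)) in Plo by (unfold lo; ring).
    replace ((- (db / 2)) ^ 2) with ((db / 2) ^ 2) in Plo by ring.
    lra. }
  assert (Hslo : lo < s).
  { destruct (Rlt_or_le lo s) as [L|L]; auto. exfalso.
    destruct (Req_dec s lo) as [E|NE]. rewrite E in Hs3. lra.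
    assert (phi a lo < phi a s) by (apply (phi_decr a tau HA); unfold lo in *; lra). lra. }
  assert (Hsd : Rabs (s - tau) < db / 2) by (rewrite Rabs_left by lra; unfold lo in Hslo; lra).
  assert (Bs1 : c1 / 2 * (s - tau) ^ 2 <= phi a s - phi a tau) by (apply Q1; lra).
  assert (Bs2 : phi a s - phi a tau <= c2 / 2 * (s - tau) ^ 2) by (apply Q2; lra).
  rewrite Hs3 in Bs1, Bs2.
  assert (Ev : (s - tau) ^ 2 = (tau - s) ^ 2) by ring. rewrite Ev in Bs1, Bs2.
  assert (R1 : c1 * (tau - s) ^ 2 <= c2 * (t - tau) ^ 2) by lra.
  assert (R2 : c1 * (t - tau) ^ 2 <= c2 * (tau - s) ^ 2) by lra.
  pose proof (ratio_bound c1 c2 (t - tau) (tau - s) Hc1 Hc12 ltac:(lra) ltac:(lra) R1 R2) as RB.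
  apply (final_est tau t s ((c2 - c1) * c2 / c1 ^ 2) eps); auto.
  unfold c1, c2. replace (K + kap - (K - kap)) with (2 * kap) by ring.
  assert (K / 2 <= K - kap) by lra.
  assert ((K / 2) ^ 2 <= (K - kap) ^ 2) by (simpl; rewrite !Rmult_1_r; apply Rmult_le_compat; lra).
  assert (K + kap <= 3 * K / 2) by lra.
  apply Rle_trans with (2 * kap * (3 * K / 2) / (K / 2) ^ 2).
  { unfold Rdiv. apply Rmult_le_compat. nra. left; apply Rinv_0_lt_compat; apply pow_lt; lra.
    apply Rmult_le_compat_l; lra. apply Rinv_le_contravar. apply pow_lt; lra. auto. }
  replace (2 * kap * (3 * K / 2) / (K / 2) ^ 2) with (12 * kap / K) by (field; lra).
  apply Rmult_le_reg_r with K; auto. replace (12 * kap / K * K) with (12 * kap) by (field; lra).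
  nra.
Qed.


Lemma left_lim a tau : HypA a tau ->
  filterlim (fun t => (extinction_prob a t - 1) / (t - tau)) (at_left tau) (locally 0).
Proof.
  intros HA. pose proof HA as [Hn [Ha [Htau [HR _]]]].
  apply filterlim_locally. intros eps.
  exists (mkposreal tau Htau). intros y0 Hy Hyt. set (t := (y0 : R)) in *.
  apply ball_lt in Hy. simpl in Hy.
  rewrite (q_le_tau a tau t HA) by lra.
  replace ((1 - 1) / (t - tau)) with 0 by (field; lra).
  apply ball_center.
Qed.

Theorem theorem6p8 (a : nat -> R) (tau : R) :
  in_Kstar a -> is_apex a tau ->
  let q := extinction_prob a in
  (forall t, 0 < t -> Rbar_lt t (radius a) -> t <> tau ->
     is_derive q t
       (q t / t * ((1 - mean_f a t) / (1 - mean_f a (t * q t)) - 1)))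
  /\ filterlim (fun t => (q t - 1) / (t - tau)) (at_right tau) (locally (- 2 / tau))
  /\ filterlim (fun t => (q t - 1) / (t - tau)) (at_left tau) (locally 0).
Proof.
  intros [[Hn [Ha _]] _] Hap q.
  assert (HA : HypA a tau) by (split; [|split]; auto).
  split; [|split].
  - intros t Ht HtR Hne. destruct (Rlt_or_le t tau) as [L|L].
    + apply (deriv_below a tau t HA Ht L).
    + apply (deriv_above a tau t HA). lra. auto.
  - apply right_lim; auto.
  - apply left_lim; auto.
Qed.
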